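(* If $xy\in E(C)$ and $P$ is an external $x,y$-path, then $P$ has an even number of edges.
   Context: All graphs are simple. $\mathcal{G}^*$ denotes the class of graphs in which any two distinct odd cycles share at most one edge. Standing setting: $G\in\mathcal{G}^*$ is $2$-connected, and $C$ is a longest odd cycle of $G$ with $|C|\ge 5$. We also write $C$ for its vertex set. For $x,y\in C$, an external $x,y$-path is an $x,y$-path meeting $C$ only at its endpoints. *)

(* Defs.v *)
From mathcomp Require Import all_boot.
Set Implicit Arguments. Unset Strict Implicit. Unset Printing Implicit Defensive.

Definition simple_graph (T : finType) (e : rel T) : Prop :=
  symmetric e /\ irreflexive e.

(* A cycle is a duplicate-free cyclic sequence of at least 3 vertices,
   consecutive vertices (cyclically) adjacent. Its length is size s. *)
Definition is_cycle (T : finType) (e : rel T) (s : seq T) : Prop :=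
  [/\ uniq s, 3 <= size s & cycle e s].

Definition is_odd_cycle (T : finType) (e : rel T) (s : seq T) : Prop :=
  is_cycle e s /\ odd (size s).

Definition cedges (T : finType) (s : seq T) : {set {set T}} :=
  [set [set x; next s x] | x in s].

(* The class G*: any two distinct odd cycles (distinct as subgraphs, i.e.
   different edge sets) share at most one edge. *)
Definition in_Gstar (T : finType) (e : rel T) : Prop :=
  forall s1 s2 : seq T, is_odd_cycle e s1 -> is_odd_cycle e s2 ->
    cedges s1 != cedges s2 -> #|cedges s1 :&: cedges s2| <= 1.

Definition two_connected (T : finType) (e : rel T) : Prop :=
  [/\ 3 <= #|T|,
      (forall a b : T, connect e a b) &
      (forall v a b : T, a != v -> b != v ->
         connect [rel u w | [&& e u w, u != v & w != v]] a b)].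

Definition longest_odd_cycle (T : finType) (e : rel T) (C : seq T) : Prop :=
  is_odd_cycle e C /\ forall D, is_odd_cycle e D -> size D <= size C.

(* An x,y-path x :: p (ending at y, last x p = y, |p| edges), simple,
   meeting C only at its endpoints. *)
Definition external_path (T : finType) (e : rel T) (C : seq T)
    (x y : T) (p : seq T) : Prop :=
  [/\ x \in C, y \in C, path e x p & uniq (x :: p)] /\
  [/\ last x p = y, 0 < size p &
      forall z, z \in p -> z != y -> z \notin C].

(* Main.v *)
Require Import Defs.
From mathcomp Require Import all_boot zify.

Lemma key (T : finType) (e : rel T) (C : seq T) (x y : T) (p : seq T) :
  uniq C -> cycle e C -> x \in C -> next C x = y -> x != y ->
  path e x p -> uniq (x :: p) -> last x p = y ->
  (forall z, z \in p -> z != y -> z \notin C) ->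
  odd (size C) -> odd (size p) -> p != [:: y] ->
  exists D, is_odd_cycle e D /\ size C < size D.
Proof.
move=> UC cC xC nxy xny pp up lp pC oC op py.
case/rot_to: (xC) => i t rit.
have UC' : uniq (x :: t) by rewrite -rit rot_uniq.
have cC' : cycle e (x :: t) by rewrite -rit rot_cycle.
have nx : next (x :: t) x = y by rewrite -rit next_rot.
case: t rit UC' cC' nx => [|y' q] rit UC' cC' nx.
  by rewrite /= eqxx in nx; rewrite nx eqxx in xny.
rewrite /= eqxx in nx; subst y'.
have szC : size C = (size q).+2 by rewrite -(size_rot i) rit.
have sz2 : 2 <= size p.
  case: p py lp op {pp up pC} => [|a [|b s]] //= H1 H2.
  by rewrite H2 eqxx in H1.
exists (x :: p ++ q); split; last first.
  rewrite szC /= size_cat; lia.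

split; last first.
  rewrite /= size_cat oddD op /=.
  by move: oC; rewrite szC /= negbK.
split.
- rewrite -cat_cons cat_uniq up /=.
  move: UC'; rewrite /= !inE negb_or => /andP [/andP [_ xq] /andP [yq uq]].
  rewrite uq andbT; apply/hasPn => z zq /=; rewrite inE negb_or.
  apply/andP; split; first by apply: contraNneq xq => <-.
  apply/negP => zp.
  have zC : z \in C by rewrite -(mem_rot i) rit !inE zq !orbT.
  have zy : z != y by apply: contraNneq yq => <-.
  by move: (pC z zp zy); rewrite zC.
- rewrite /= size_cat; lia.
- rewrite /= rcons_cat cat_path pp lp /=.
  by move: cC' => /= /andP [_ ->].
Qed.

Theorem mainTheorem6 (T : finType) (e : rel T) (C : seq T) (x y : T)
    (p : seq T) :
  simple_graph e -> in_Gstar e -> two_connected e ->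
  longest_odd_cycle e C -> 5 <= size C ->
  [set x; y] \in cedges C ->
  external_path e C x y p ->
  p != [:: y] ->
  ~~ odd (size p).
Proof.
move=> [sym _] _ _ [[[UC _ cC] oC] lng] _ /imsetP [z zC Exy]
  [[xC yC pp up] [lp szp pC]] py.
apply/negP => op.
have xny : x != y.
  apply/negP => /eqP exy; move: up; rewrite /= => /andP [xp _].
  case: p lp szp xp {pp pC py op} => [|a s] //= H _.
  by rewrite exy -H mem_last.
have [[ex ey] | [ex ey]] : (x = z /\ y = next C z) \/ (x = next C z /\ y = z).
  have hx : x \in [set z; next C z] by rewrite -Exy !inE eqxx.
  have hy : y \in [set z; next C z] by rewrite -Exy !inE eqxx orbT.
  case/set2P: hx => hx; case/set2P: hy => hy; auto;
    by rewrite hx hy eqxx in xny.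
- have [D [oD lt]] := @key T e C x y p UC cC xC (esym (etrans ey (congr1 _ (esym ex)))) xny pp up lp pC oC op py.
  by move: (lng D oD); rewrite leqNgt lt.
- have UC' : uniq (rev C) by rewrite rev_uniq.
  have cC' : cycle e (rev C).
    have H : (fun a b => e b a) =2 e by move=> a b; rewrite sym.
    rewrite rev_cycle; case: (C) cC => [|a s] //=; by rewrite (eq_path H).
  have nx : next (rev C) x = y by rewrite next_rev // ex ey prev_next.
  have xC' : x \in rev C by rewrite mem_rev.
  have pC' : forall w, w \in p -> w != y -> w \notin rev C.
    by move=> w wp wy; rewrite mem_rev; apply: pC.
  have oC' : odd (size (rev C)) by rewrite size_rev.
  have [D [oD lt]] := @key T e (rev C) x y p UC' cC' xC' nx xny pp up lp pC' oC' op py.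
  rewrite size_rev in lt; by move: (lng D oD); rewrite leqNgt lt.
Qed.
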